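(* In the two-player zero-sum setting and algorithm SBMM described in the context, for every $h\in[H]$, $s\in\mathcal{S}$ and any fixed vectors $\underline{V}_{h+1},\overline{V}_{h+1}\in\mathbb{R}^{\mathcal{S}}$, the function $(\mu,\nu)\mapsto\underline{V}_h^{\mu,\nu}(s)$ on $\Delta(\mathcal{A})\times\Delta(\mathcal{B})$ is concave in $\mu$ for each fixed $\nu$ and concave in $\nu$ for each fixed $\mu$, and the function $(\mu,\nu)\mapsto\overline{V}_h^{\mu,\nu}(s)$ is convex in $\mu$ for each fixed $\nu$ and convex in $\nu$ for each fixed $\mu$.
   Context: Two-player zero-sum episodic Markov game: finite state space $\mathcal{S}$ ($|\mathcal{S}|=S$), max-player actions $\mathcal{A}$ ($|\mathcal{A}|=A$), min-player actions $\mathcal{B}$ ($|\mathcal{B}|=B$), horizon $H$. Offline dataset $\mathcal{D}=\{(s_h^k,a_h^k,b_h^k,r_h^k,s_{h+1}^k)\}_{h\in[H],k\in[n]}$. Let $n_h(s,a,b)=\#\{k:(s_h^k,a_h^k,b_h^k)=(s,a,b)\}$, $\mathcal{K}_h(s)=\{(a,b):n_h(s,a,b)\neq0\}$; for $n_h(s,a,b)>0$, $\widehat{r}_h(s,a,b)$ is the average of $r_h^k$ and $\widehat{P}_h(s'|s,a,b)$ the empirical frequency of $s_{h+1}^k=s'$ over those $k$; otherwise both are $0$. $\mathcal{N}(\Pi)>0$ is a fixed number (a covering number of a strategy class) and $\iota=32\log(2ABSHn/\delta)$. The bonus is $b_h(s,\mu,\nu)=H\sqrt{\sum_{(a,b)\in\mathcal{K}_h(s)}\frac{\mu(a)^2\nu(b)^2}{n_h(s,a,b)}\log(\mathcal{N}(\Pi))\iota}+\sqrt{\iota}/n$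 for $\mu\in\Delta(\mathcal{A}),\nu\in\Delta(\mathcal{B})$. Define $\underline{Q}_h(s,a,b)=\widehat{r}_h(s,a,b)+\sum_{s'}\widehat{P}_h(s'|s,a,b)\underline{V}_{h+1}(s')$, $\underline{V}_h^{\mu,\nu}(s)=\sum_{a,b}\mu(a)\nu(b)\underline{Q}_h(s,a,b)-b_h(s,\mu,\nu)$, $\overline{Q}_h(s,a,b)=\widehat{r}_h(s,a,b)+\sum_{s'}\widehat{P}_h(s'|s,a,b)\overline{V}_{h+1}(s')+H\mathbf{1}\{(a,b)\notin\mathcal{K}_h(s)\}$, $\overline{V}_h^{\mu,\nu}(s)=\sum_{a,b}\mu(a)\nu(b)\overline{Q}_h(s,a,b)+b_h(s,\mu,\nu)$. *)

(* Defs.v *)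
From HB Require Import structures.
From mathcomp Require Import all_boot all_order all_algebra.
From mathcomp Require Import reals exp.
Set Implicit Arguments. Unset Strict Implicit. Unset Printing Implicit Defensive.
Import Order.TTheory GRing.Theory Num.Theory.
Local Open Scope ring_scope.

(* Offline dataset, step index h : 'I_H (0-based), episode index k : 'I_n.
   For step h and episode k:  (dS h k, dA h k, dB h k, dR h k, dS' h k)
   = (s_h^k, a_h^k, b_h^k, r_h^k, s_{h+1}^k). *)
Section SBMM.
Variables (R : realType) (S A B : finType) (H n : nat).
Variables (dS : 'I_H -> 'I_n -> S) (dA : 'I_H -> 'I_n -> A)
          (dB : 'I_H -> 'I_n -> B) (dR : 'I_H -> 'I_n -> R)
          (dS' : 'I_H -> 'I_n -> S).

Definition cnt (h : 'I_H) (s : S) (a : A) (b : B) : nat :=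
  #|[set k : 'I_n | (dS h k == s) && (dA h k == a) && (dB h k == b)]|.

Definition inK (h : 'I_H) (s : S) (a : A) (b : B) : bool := cnt h s a b != 0%N.

Definition rhat (h : 'I_H) (s : S) (a : A) (b : B) : R :=
  if inK h s a b then
    (\sum_(k : 'I_n | (dS h k == s) && (dA h k == a) && (dB h k == b)) dR h k)
      / (cnt h s a b)%:R
  else 0.

Definition Phat (h : 'I_H) (s : S) (a : A) (b : B) (s' : S) : R :=
  if inK h s a b then
    #|[set k : 'I_n | (dS h k == s) && (dA h k == a) && (dB h k == b)
                       && (dS' h k == s')]|%:R / (cnt h s a b)%:R
  else 0.

Definition iota (delta : R) : R :=
  32 * ln (2 * #|A|%:R * #|B|%:R * #|S|%:R * H%:R * n%:R / delta).

(* bonus b_h(s, mu, nu) ; NPi is the covering number N(Pi) *)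
Definition bonus (NPi delta : R) (h : 'I_H) (s : S)
    (mu : {ffun A -> R}) (nu : {ffun B -> R}) : R :=
  H%:R * Num.sqrt ((\sum_(a : A) \sum_(b : B | inK h s a b)
                      mu a ^+ 2 * nu b ^+ 2 / (cnt h s a b)%:R)
                   * ln NPi * iota delta)
  + Num.sqrt (iota delta) / n%:R.

Definition Qlow (Vlow' : {ffun S -> R}) (h : 'I_H) (s : S) (a : A) (b : B) : R :=
  rhat h s a b + \sum_(s' : S) Phat h s a b s' * Vlow' s'.

Definition Qup (Vup' : {ffun S -> R}) (h : 'I_H) (s : S) (a : A) (b : B) : R :=
  rhat h s a b + \sum_(s' : S) Phat h s a b s' * Vup' s'
  + H%:R * (if inK h s a b then 0 else 1).

Definition Vlow (NPi delta : R) (Vlow' : {ffun S -> R}) (h : 'I_H) (s : S)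
    (mu : {ffun A -> R}) (nu : {ffun B -> R}) : R :=
  \sum_(a : A) \sum_(b : B) mu a * nu b * Qlow Vlow' h s a b
  - bonus NPi delta h s mu nu.

Definition Vup (NPi delta : R) (Vup' : {ffun S -> R}) (h : 'I_H) (s : S)
    (mu : {ffun A -> R}) (nu : {ffun B -> R}) : R :=
  \sum_(a : A) \sum_(b : B) mu a * nu b * Qup Vup' h s a b
  + bonus NPi delta h s mu nu.
End SBMM.

Definition simplex (R : realType) (T : finType) (p : {ffun T -> R}) : Prop :=
  (forall x, 0 <= p x) /\ \sum_(x : T) p x = 1.

Definition cvxcomb (R : realType) (T : finType) (t : R) (p q : {ffun T -> R})
  : {ffun T -> R} := [ffun x => t * p x + (1 - t) * q x].

Definition concave_on_simplex (R : realType) (T : finType)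
    (f : {ffun T -> R} -> R) : Prop :=
  forall p q t, simplex p -> simplex q -> 0 <= t <= 1 ->
    t * f p + (1 - t) * f q <= f (cvxcomb t p q).

Definition convex_on_simplex (R : realType) (T : finType)
    (f : {ffun T -> R} -> R) : Prop :=
  forall p q t, simplex p -> simplex q -> 0 <= t <= 1 ->
    f (cvxcomb t p q) <= t * f p + (1 - t) * f q.

(* Main.v *)
Require Import Defs.
From HB Require Import structures.
From mathcomp Require Import all_boot all_order all_algebra.
From mathcomp Require Import reals exp.
From mathcomp Require Import ring lra.
Import Order.TTheory GRing.Theory Num.Theory.
Local Open Scope ring_scope.
Lemma cs_fin (R : realType) (I : finType) (w x y : I -> R) :
  (forall i, 0 <= w i) ->
  \sum_i x i * y i * w i <=
  Num.sqrt (\sum_i x i ^+ 2 * w i) * Num.sqrt (\sum_i y i ^+ 2 * w i).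
Proof.
move=> hw.
set X := \sum_i x i ^+ 2 * w i; set Y := \sum_i y i ^+ 2 * w i.
have X0 : 0 <= X by apply: sumr_ge0 => i _; apply: mulr_ge0 => //; apply: sqr_ge0.
have Y0 : 0 <= Y by apply: sumr_ge0 => i _; apply: mulr_ge0 => //; apply: sqr_ge0.
have key : forall i, (x i * y i * w i) ^+ 2 = (x i ^+ 2 * w i) * (y i ^+ 2 * w i).
  by move=> i; ring.
have [Xe|Xn] := eqVneq X 0.
  have h0 : forall i, x i ^+ 2 * w i = 0.
    move=> i; apply/eqP; move/eqP: Xe; rewrite psumr_eq0 => [/allP H|j _].
      by apply: H; rewrite mem_index_enum.
    by apply: mulr_ge0 => //; apply: sqr_ge0.
  rewrite big1 ?mulr_ge0 ?sqrtr_ge0 // => i _.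
  by apply/eqP; rewrite -sqrf_eq0 key h0 mul0r.
have [Ye|Yn] := eqVneq Y 0.
  have h0 : forall i, y i ^+ 2 * w i = 0.
    move=> i; apply/eqP; move/eqP: Ye; rewrite psumr_eq0 => [/allP H|j _].
      by apply: H; rewrite mem_index_enum.
    by apply: mulr_ge0 => //; apply: sqr_ge0.
  rewrite big1 ?mulr_ge0 ?sqrtr_ge0 // => i _.
  by apply/eqP; rewrite -sqrf_eq0 key h0 mulr0.
set a := Num.sqrt X; set b := Num.sqrt Y.
have a0 : 0 < a by rewrite lt_def sqrtr_ge0 andbT sqrtr_eq0 -ltNge lt_def Xn.
have b0 : 0 < b by rewrite lt_def sqrtr_ge0 andbT sqrtr_eq0 -ltNge lt_def Yn.
have a2 : a ^+ 2 = X by rewrite sqr_sqrtr.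
have b2 : b ^+ 2 = Y by rewrite sqr_sqrtr.
have term : forall i, 2 * (x i * y i * w i) * (a * b) <=
    x i ^+ 2 * w i * b ^+ 2 + y i ^+ 2 * w i * a ^+ 2.
  move=> i; rewrite -subr_ge0.
  have -> : x i ^+ 2 * w i * b ^+ 2 + y i ^+ 2 * w i * a ^+ 2 -
     2 * (x i * y i * w i) * (a * b) = w i * (x i * b - y i * a) ^+ 2 by ring.
  by apply: mulr_ge0 => //; apply: sqr_ge0.
have := ler_sum (index_enum I) (fun i _ => term i) => /(_ predT).
rewrite big_split /= -!mulr_suml -mulr_sumr -/X -/Y -a2 -b2 => hs.
have ab0 : 0 < 2 * (a * b) by rewrite !mulr_gt0.
rewrite -(ler_pM2r ab0).
have -> : a * b * (2 * (a * b)) = a ^+ 2 * b ^+ 2 + b ^+ 2 * a ^+ 2 by ring.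
by rewrite mulrC -mulrA (mulrC (a * b)) mulrA.
Qed.

Lemma sqrt_cvx (R : realType) (I : finType) (w x y : I -> R) (k t : R) :
  (forall i, 0 <= w i) -> 0 <= t <= 1 ->
  Num.sqrt ((\sum_i (t * x i + (1 - t) * y i) ^+ 2 * w i) * k) <=
  t * Num.sqrt ((\sum_i x i ^+ 2 * w i) * k) +
  (1 - t) * Num.sqrt ((\sum_i y i ^+ 2 * w i) * k).
Proof.
move=> hw /andP[t0 t1].
have sge0 : forall z : I -> R, 0 <= \sum_i z i ^+ 2 * w i.
  by move=> z; apply: sumr_ge0 => i _; apply: mulr_ge0 => //; apply: sqr_ge0.
have [k0|k0] := lerP k 0.
  by rewrite !ler0_sqrtr ?mulr0 ?addr0 // mulr_ge0_le0.
rewrite !sqrtrM //.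
set X := \sum_i x i ^+ 2 * w i; set Y := \sum_i y i ^+ 2 * w i.
set a := Num.sqrt X; set b := Num.sqrt Y.
have a2 : a ^+ 2 = X by rewrite sqr_sqrtr //; apply: sge0.
have b2 : b ^+ 2 = Y by rewrite sqr_sqrtr //; apply: sge0.
have t10 : 0 <= 1 - t by rewrite subr_ge0.
rewrite mulrA (mulrA (1 - t)) -mulrDl ler_wpM2r ?sqrtr_ge0 //.
have c0 : 0 <= t * a + (1 - t) * b by rewrite addr_ge0 ?mulr_ge0 ?sqrtr_ge0.
rewrite -(ger0_norm c0) -sqrtr_sqr ler_sqrt ?sqr_ge0 //.
have -> : \sum_i (t * x i + (1 - t) * y i) ^+ 2 * w i =
   t ^+ 2 * X + 2 * t * (1 - t) * (\sum_i x i * y i * w i) + (1 - t) ^+ 2 * Y.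
  rewrite /X /Y !mulr_sumr -!big_split /=; apply: eq_bigr => i _; ring.
have cs := @cs_fin _ _ w x y hw.
rewrite -/X -/Y -/a -/b in cs.
rewrite -subr_ge0.
have -> : (t * a + (1 - t) * b) ^+ 2 -
   (t ^+ 2 * X + 2 * t * (1 - t) * (\sum_i x i * y i * w i) + (1 - t) ^+ 2 * Y)
   = 2 * t * (1 - t) * (a * b - \sum_i x i * y i * w i).
  rewrite -a2 -b2; ring.
by rewrite !mulr_ge0 // subr_ge0.
Qed.

Lemma bonus_cvx (R : realType) (T : finType) (G : {ffun T -> R} -> R) (W : T -> R)
  (Hh k c t : R) (p q : {ffun T -> R}) :
  (forall m, G m = \sum_i m i ^+ 2 * W i) -> (forall i, 0 <= W i) ->
  0 <= Hh -> 0 <= t <= 1 ->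
  Hh * Num.sqrt (G (cvxcomb t p q) * k) + c <=
  t * (Hh * Num.sqrt (G p * k) + c) + (1 - t) * (Hh * Num.sqrt (G q * k) + c).
Proof.
move=> hG hW hH ht.
have := @sqrt_cvx R T W p q k t hW ht.
rewrite !hG.
have -> : \sum_i cvxcomb t p q i ^+ 2 * W i =
          \sum_i (t * p i + (1 - t) * q i) ^+ 2 * W i.
  by apply: eq_bigr => i _; rewrite ffunE.
move=> hs.
have := ler_wpM2l hH hs.
set u := Num.sqrt _; set v := Num.sqrt _; set z := Num.sqrt _.
move=> h2.
have -> : t * (Hh * v + c) + (1 - t) * (Hh * z + c) = Hh * (t * v + (1 - t) * z) + c by ring.
by rewrite lerD2r.
Qed.

Lemma lin_mu (R : realType) (A B : finType) (F : A -> B -> R) t (p q : {ffun A -> R}) (nu : {ffun B -> R}) :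
  \sum_a \sum_b cvxcomb t p q a * nu b * F a b =
  t * (\sum_a \sum_b p a * nu b * F a b) + (1 - t) * (\sum_a \sum_b q a * nu b * F a b).
Proof.
rewrite !mulr_sumr -big_split; apply: eq_bigr => a _.
rewrite !mulr_sumr -big_split; apply: eq_bigr => b _.
rewrite /cvxcomb ffunE /=; ring.
Qed.

Lemma lin_nu (R : realType) (A B : finType) (F : A -> B -> R) t (p q : {ffun B -> R}) (mu : {ffun A -> R}) :
  \sum_a \sum_b mu a * cvxcomb t p q b * F a b =
  t * (\sum_a \sum_b mu a * p b * F a b) + (1 - t) * (\sum_a \sum_b mu a * q b * F a b).
Proof.
rewrite !mulr_sumr -big_split; apply: eq_bigr => a _.
rewrite !mulr_sumr -big_split; apply: eq_bigr => b _.
rewrite /cvxcomb ffunE /=; ring.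
Qed.

Theorem proposition2 (R : realType) (S A B : finType) (H n : nat)
    (dS : 'I_H -> 'I_n -> S) (dA : 'I_H -> 'I_n -> A)
    (dB : 'I_H -> 'I_n -> B) (dR : 'I_H -> 'I_n -> R)
    (dS' : 'I_H -> 'I_n -> S)
    (NPi delta : R) (hNPi : 0 < NPi) (hdelta : 0 < delta)
    (h : 'I_H) (s : S) (Vlow' Vup' : {ffun S -> R}) :
  (forall nu : {ffun B -> R}, simplex nu ->
     concave_on_simplex
       (fun mu => Vlow dS dA dB dR dS' NPi delta Vlow' h s mu nu)) /\
  (forall mu : {ffun A -> R}, simplex mu ->
     concave_on_simplex
       (fun nu => Vlow dS dA dB dR dS' NPi delta Vlow' h s mu nu)) /\
  (forall nu : {ffun B -> R}, simplex nu ->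
     convex_on_simplex
       (fun mu => Vup dS dA dB dR dS' NPi delta Vup' h s mu nu)) /\
  (forall mu : {ffun A -> R}, simplex mu ->
     convex_on_simplex
       (fun nu => Vup dS dA dB dR dS' NPi delta Vup' h s mu nu)).
Proof.
set K := fun a b => inK dS dA dB h s a b.
set C := fun a b => (cnt dS dA dB h s a b)%:R : R.
set k := ln NPi * Defs.iota S A B H n delta.
set c := Num.sqrt (Defs.iota S A B H n delta) / n%:R.
have hH : 0 <= H%:R :> R by [].
have bmu : forall nu : {ffun B -> R}, exists W : A -> R, (forall a, 0 <= W a) /\
   forall m, bonus dS dA dB NPi delta h s m nu =
     H%:R * Num.sqrt ((\sum_a m a ^+ 2 * W a) * k) + c.
  move=> nu; exists (fun a => \sum_(b | K a b) nu b ^+ 2 / C a b); split.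
    move=> a; apply: sumr_ge0 => b _; apply: divr_ge0 => //; apply: sqr_ge0.
  move=> m; rewrite /bonus /k mulrA; congr (_ * Num.sqrt (_ * _ * _) + _).
  apply: eq_bigr => a _; rewrite mulr_sumr; apply: eq_bigr => b _; by rewrite mulrA.
have bnu : forall mu : {ffun A -> R}, exists W : B -> R, (forall b, 0 <= W b) /\
   forall m, bonus dS dA dB NPi delta h s mu m =
     H%:R * Num.sqrt ((\sum_b m b ^+ 2 * W b) * k) + c.
  move=> mu; exists (fun b => \sum_a (if K a b then mu a ^+ 2 / C a b else 0)); split.
    move=> b; apply: sumr_ge0 => a _; case: ifP => _ //; apply: divr_ge0 => //; apply: sqr_ge0.
  move=> m; rewrite /bonus /k mulrA; congr (_ * Num.sqrt (_ * _ * _) + _).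
  under eq_bigr do rewrite big_mkcond.
  rewrite exchange_big /=; apply: eq_bigr => b _; rewrite mulr_sumr; apply: eq_bigr => a _.
  rewrite /K; case: ifP => _; last by rewrite mulr0.
  by rewrite /C; ring.
split; [|split; [|split]].
- move=> nu _ p q t _ _ ht; have [W [hW hb]] := bmu nu.
  have := @bonus_cvx R A (fun m => \sum_a m a ^+ 2 * W a) W _ k c t p q (fun m => erefl) hW hH ht => /= hc.
  rewrite /Vlow lin_mu !hb; lra.
- move=> mu _ p q t _ _ ht; have [W [hW hb]] := bnu mu.
  have := @bonus_cvx R B (fun m => \sum_b m b ^+ 2 * W b) W _ k c t p q (fun m => erefl) hW hH ht => /= hc.
  rewrite /Vlow lin_nu !hb; lra.
- move=> nu _ p q t _ _ ht; have [W [hW hb]] := bmu nu.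
  have := @bonus_cvx R A (fun m => \sum_a m a ^+ 2 * W a) W _ k c t p q (fun m => erefl) hW hH ht => /= hc.
  rewrite /Vup lin_mu !hb; lra.
- move=> mu _ p q t _ _ ht; have [W [hW hb]] := bnu mu.
  have := @bonus_cvx R B (fun m => \sum_b m b ^+ 2 * W b) W _ k c t p q (fun m => erefl) hW hH ht => /= hc.
  rewrite /Vup lin_nu !hb; lra.
Qed.
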